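(* Let the setting, algorithm and notation be as described in the context. For $(x,y,z)\in\mathcal X\times\mathcal Y\times\mathcal Z$ and $k\ge0$ write \[ \Gamma_{k}(x,y,z):=\big(p(x^{k+1})+q(y^{k+1})\big)-\big(p(x)+q(y)\big)+\langle x^{k+1}-x,\nabla f(x)+Az\rangle+\langle y^{k+1}-y,\nabla g(y)+Bz\rangle+\langle\tilde z^{k+1}-z,-(A^*x+B^*y-c)\rangle . \] (a) For every $k\ge0$ and $(x,y,z)\in\mathcal X\times\mathcal Y\times\mathcal Z$, \[ \Gamma_k(x,y,z)+\tfrac12\big(\phi_{k+1}(x,y,z)-\phi_k(x,y,z)\big)\le-\tfrac12\Big(s_{k+1}+(1-\tau)\sigma\|r^{k+1}\|^2+\sigma\|A^*x^{k+1}+B^*y^k-c\|^2\Big). \] (b) Assume moreover $\frac12\widehat\Sigma_g+T\succeq0$. Then for every $\alpha\in(0,1]$, every $k\ge1$ and every $(x,y,z)\in\mathcal X\times\mathcal Y\times\mathcal Z$, with $\kappa:=1-\alpha\min(\tau,\tau^{-1})$, \[ \Gamma_k(x,y,z)+\tfrac12\Big\{\big[\phi_{k+1}(x,y,z)+\kappa\sigma\|r^{k+1}\|^2+\alpha\xi_{k+1}\big]-\big[\phi_k(x,y,z)+\kappa\sigma\|r^k\|^2+\alpha\xi_k\big]\Big\}\le-\tfrac12\Big\{t_{k+1}+\big[-\tau+\alpha\min(1+\tau,1+\tau^{-1})\big]\sigma\|r^{k+1}\|^2\Big\}, \] where $t_{k+1}$ is defined with this $\alpha$.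
   Context: Let $\mathcal X,\mathcal Y,\mathcal Z$ be finite-dimensional real Euclidean spaces with inner products $\langle\cdot,\cdot\rangle$ and induced norms $\|\cdot\|$. Let $p:\mathcal X\to(-\infty,+\infty]$ and $q:\mathcal Y\to(-\infty,+\infty]$ be closed proper convex functions, and let $f:\mathcal X\to\mathbb R$, $g:\mathcal Y\to\mathbb R$ be convex differentiable functions with Lipschitz continuous gradients. Let $A:\mathcal Z\to\mathcal X$, $B:\mathcal Z\to\mathcal Y$ be linear maps with adjoints $A^*,B^*$, and $c\in\mathcal Z$. Let $\Sigma_f,\widehat\Sigma_f$ (on $\mathcal X$) and $\Sigma_g,\widehat\Sigma_g$ (on $\mathcal Y$) be self-adjoint positive semidefinite linear operators with $\widehat\Sigma_f\succeq\Sigma_f$, $\widehat\Sigma_g\succeq\Sigma_g$, such that for all $x,x'\in\mathcal X$, $y,y'\in\mathcal Y$: $f(x')+\langle x-x',\nabla f(x')\rangle+\frac12\|x-x'\|^2_{\Sigma_f}\le f(x)\le f(x')+\langle x-x',\nabla f(x')\rangle+\frac12\|x-x'\|^2_{\widehat\Sigma_f}$ and the analogous two inequalities for $g$ with $\Sigma_g,\widehat\Sigma_g$. For a self-adjoint (possibly indefinite) operator $G$, $\|u\|_G^2:=\langle u,Gu\rangle$. Algorithm (Majorized iPADMM): let $\sigma>0$, $\tau>0$, and let $S:\mathcal X\to\mathcal X$, $T:\mathcal Y\to\mathcal Y$ be self-adjoint, possibly indefinite, linear operators with $\widehat\Sigma_f+S+\sigma AA^*\succeq0$ and $\widehat\Sigma_g+T+\sigma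 BB^*\succeq0$. Starting from $(x^0,y^0,z^0)\in\mathrm{dom}(p)\times\mathrm{dom}(q)\times\mathcal Z$, for $k=0,1,\dots$: $x^{k+1}\in\arg\min_{x}\{p(x)+\langle\nabla f(x^k),x\rangle+\frac12\|x-x^k\|^2_{\widehat\Sigma_f+S}+\langle z^k,A^*x\rangle+\frac\sigma2\|A^*x+B^*y^k-c\|^2\}$, $y^{k+1}\in\arg\min_{y}\{q(y)+\langle\nabla g(y^k),y\rangle+\frac12\|y-y^k\|^2_{\widehat\Sigma_g+T}+\langle z^k,B^*y\rangle+\frac\sigma2\|A^*x^{k+1}+B^*y-c\|^2\}$, $z^{k+1}=z^k+\tau\sigma(A^*x^{k+1}+B^*y^{k+1}-c)$ (the minimizers are assumed to exist). Notation: $r^k:=A^*x^k+B^*y^k-c$, $\tilde z^{k+1}:=z^k+\sigma r^{k+1}$; for $\alpha\in(0,1]$, $H_f:=\frac12\Sigma_f+S+\frac12(1-\alpha)\sigma AA^*$ and $M_g:=\frac12\Sigma_g+T+\min(\tau,1+\tau-\tau^2)\alpha\sigma BB^*$; $\phi_k(x,y,z):=(\tau\sigma)^{-1}\|z^k-z\|^2+\|x^k-x\|^2_{\widehat\Sigma_f+S}+\|y^k-y\|^2_{\widehat\Sigma_g+T}+\sigma\|A^*x+B^*y^k-c\|^2$; $\xi_{k+1}:=\|y^{k+1}-y^k\|^2_{\widehat\Sigma_g+T}$; $s_{k+1}:=\|x^{k+1}-x^k\|^2_{\frac12\Sigma_f+S}+\|y^{k+1}-y^k\|^2_{\frac12\Sigma_g+T}$;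 $t_{k+1}:=\|x^{k+1}-x^k\|^2_{H_f}+\|y^{k+1}-y^k\|^2_{M_g}$. *)

(* Defs.v *)
(* Finite-dimensional real Euclidean
   spaces are modelled as column vectors 'cV[R]_n with the standard inner
   product; linear maps as matrices, adjoints as transposes. *)
From HB Require Import structures.
From mathcomp Require Import all_boot all_order all_algebra.
From mathcomp Require Import all_classical all_reals all_analysis.
Set Implicit Arguments. Unset Strict Implicit. Unset Printing Implicit Defensive.
Import Order.TTheory GRing.Theory Num.Theory.
Import numFieldNormedType.Exports.
Local Open Scope ring_scope.
Local Open Scope classical_set_scope.

Definition ip {R : realType} {n : nat} (u v : 'cV[R]_n) : R := (u^T *m v) 0 0.

Definition nrm2 {R : realType} {n : nat} (u : 'cV[R]_n) : R := ip u u.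

Definition enorm {R : realType} {n : nat} (u : 'cV[R]_n) : R := Num.sqrt (nrm2 u).

Definition sqn {R : realType} {n : nat} (G : 'M[R]_n) (u : 'cV[R]_n) : R :=
  ip u (G *m u).

Definition selfadj {R : realType} {n : nat} (G : 'M[R]_n) : Prop := G^T = G.

Definition psd {R : realType} {n : nat} (G : 'M[R]_n) : Prop :=
  forall u : 'cV[R]_n, 0 <= sqn G u.

Definition ext_valued {R : realType} {n : nat} (p : 'cV[R]_n -> \bar R) : Prop :=
  forall x, p x != -oo%E.

Definition proper_fun {R : realType} {n : nat} (p : 'cV[R]_n -> \bar R) : Prop :=
  ext_valued p /\ exists x, (p x < +oo)%E.

Definition convex_efun {R : realType} {n : nat} (p : 'cV[R]_n -> \bar R) : Prop :=
  forall (x y : 'cV[R]_n) (t : R), 0 < t < 1 ->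
    (p (t *: x + (1 - t) *: y)%R <= t%:E * p x + (1 - t)%R%:E * p y)%E.

Definition closed_efun {R : realType} {n : nat} (p : 'cV[R]_n -> \bar R) : Prop :=
  closed [set xa : 'cV[R]_n * R | (p xa.1 <= xa.2%:E)%E].

Definition convex_fun {R : realType} {n : nat} (f : 'cV[R]_n -> R) : Prop :=
  forall (x y : 'cV[R]_n) (t : R), 0 <= t <= 1 ->
    f (t *: x + (1 - t) *: y) <= t * f x + (1 - t) * f y.

Definition is_gradient {R : realType} {n : nat} (f : 'cV[R]_n -> R)
  (gradf : 'cV[R]_n -> 'cV[R]_n) : Prop :=
  forall x, differentiable f x /\ forall h, 'd f x h = ip h (gradf x).

Definition lipschitz_fun {R : realType} {n : nat} (F : 'cV[R]_n -> 'cV[R]_n) : Prop :=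
  exists L : R, forall x y, enorm (F x - F y) <= L * enorm (x - y).

Definition quad_bounds {R : realType} {n : nat} (f : 'cV[R]_n -> R)
  (gradf : 'cV[R]_n -> 'cV[R]_n) (Sig Sighat : 'M[R]_n) : Prop :=
  forall x x' : 'cV[R]_n,
    f x' + ip (x - x') (gradf x') + 2^-1 * sqn Sig (x - x') <= f x /\
    f x <= f x' + ip (x - x') (gradf x') + 2^-1 * sqn Sighat (x - x').

(* Main.v *)
Require Import Defs.
From HB Require Import structures.
From mathcomp Require Import all_boot all_order all_algebra.
From mathcomp Require Import all_classical all_reals all_analysis.
From mathcomp Require Import ring lra.
Import Order.TTheory GRing.Theory Num.Theory.
Import numFieldNormedType.Exports.
Local Open Scope ring_scope.

Section IP.
Context {R : realType}.

Lemma ip_sum {n} (u v : 'cV[R]_n) : ip u v = \sum_i u i 0 * v i 0.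
Proof. by rewrite /ip !mxE; apply: eq_bigr => i _; rewrite mxE. Qed.

Lemma ipC {n} (u v : 'cV[R]_n) : ip u v = ip v u.
Proof. by rewrite !ip_sum; apply: eq_bigr => i _; rewrite mulrC. Qed.

Lemma ipDl {n} (u v w : 'cV[R]_n) : ip (u + v) w = ip u w + ip v w.
Proof. rewrite !ip_sum -big_split; apply: eq_bigr => i _; by rewrite mxE mulrDl. Qed.
Lemma ipDr {n} (u v w : 'cV[R]_n) : ip w (u + v) = ip w u + ip w v.
Proof. by rewrite ipC ipDl !(ipC w). Qed.
Lemma ipZl {n} a (u w : 'cV[R]_n) : ip (a *: u) w = a * ip u w.
Proof. rewrite !ip_sum mulr_sumr; apply: eq_bigr => i _; by rewrite mxE mulrA. Qed.
Lemma ipZr {n} a (u w : 'cV[R]_n) : ip w (a *: u) = a * ip w u.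
Proof. by rewrite ipC ipZl ipC. Qed.
Lemma ipNl {n} (u w : 'cV[R]_n) : ip (- u) w = - ip u w.
Proof. by rewrite -scaleN1r ipZl mulN1r. Qed.
Lemma ipNr {n} (u w : 'cV[R]_n) : ip w (- u) = - ip w u.
Proof. by rewrite ipC ipNl ipC. Qed.
Lemma ipBl {n} (u v w : 'cV[R]_n) : ip (u - v) w = ip u w - ip v w.
Proof. by rewrite ipDl ipNl. Qed.
Lemma ipBr {n} (u v w : 'cV[R]_n) : ip w (u - v) = ip w u - ip w v.
Proof. by rewrite ipDr ipNr. Qed.
Lemma ipMl {n m} (M : 'M[R]_(n,m)) (u : 'cV[R]_m) (v : 'cV[R]_n) :
  ip (M *m u) v = ip u (M^T *m v).
Proof. by rewrite /ip trmx_mul mulmxA. Qed.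
Lemma ipMr {n m} (M : 'M[R]_(n,m)) (u : 'cV[R]_m) (v : 'cV[R]_n) :
  ip v (M *m u) = ip (M^T *m v) u.
Proof. by rewrite ipC ipMl ipC. Qed.
Lemma nrm2_ge0 {n} (u : 'cV[R]_n) : 0 <= nrm2 u.
Proof. rewrite /nrm2 ip_sum; apply: sumr_ge0 => i _; by rewrite -expr2 sqr_ge0. Qed.
Lemma sqnDm {n} (M1 M2 : 'M[R]_n) u : sqn (M1 + M2) u = sqn M1 u + sqn M2 u.
Proof. by rewrite /sqn mulmxDl ipDr. Qed.
Lemma sqnZm {n} a (M : 'M[R]_n) u : sqn (a *: M) u = a * sqn M u.
Proof. by rewrite /sqn -scalemxAl ipZr. Qed.
Lemma sqnAAT {n m} (M : 'M[R]_(n,m)) u : sqn (M *m M^T) u = nrm2 (M^T *m u).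
Proof. by rewrite /sqn -mulmxA ipMr. Qed.
Lemma ipQsym {n} (Q : 'M[R]_n) u v : selfadj Q -> ip u (Q *m v) = ip v (Q *m u).
Proof. by move=> hQ; rewrite ipMr hQ ipC. Qed.
Lemma ipQl {n} (Q : 'M[R]_n) u v : selfadj Q -> ip (Q *m u) v = ip u (Q *m v).
Proof. by move=> hQ; rewrite ipMl hQ. Qed.

Ltac ipexp1 := rewrite ?mulmxDr ?mulmxN ?mulmxDl ?mulNmx -?scalemxAr -?scalemxAl -?mulmxA ?ipDl ?ipDr ?ipNl ?ipNr ?ipZl ?ipZr.
Ltac ipexp := do 3 ipexp1.

Lemma hexp {n m} (Q : 'M[R]_n) (M : 'M[R]_(n,m)) a x0 zz b sigma x1 d t :
 selfadj Q ->
 let h := fun x => ip a x + 2^-1 * sqn Q (x - x0) + ip zz (M^T *m x) + sigma / 2 * nrm2 (M^T *m x + b) in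
 h (x1 + t *: d) = h x1 + t * ip (a + Q *m (x1 - x0) + M *m zz + sigma *: (M *m (M^T *m x1 + b))) d
   + t^+2 * (2^-1 * (sqn Q d + sigma * nrm2 (M^T *m d))) :> R.
Proof.
move=> hQ h; rewrite /h /sqn /nrm2.
ipexp.
rewrite ?(ipQl _ _ _ hQ) ?(ipMl M).
rewrite (ipQsym _ d x1 hQ) (ipQsym _ d x0 hQ) (ipQsym _ x0 x1 hQ) (ipC (M^T *m d) (M^T *m x1)) (ipC (M^T *m d) b) (ipC b (M^T *m x1)).
by field.
Qed.
Lemma tt (a t : R) : t^+2 * a = t * t * a :> R.
Proof. ring. Qed.
Lemma tt2 {n} (u v : 'cV[R]_n) (t : R) : t^+2 * ip u v = t * t * ip u v.
Proof. ring. Qed.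
Lemma tt3 {n} (u v : 'cV[R]_n) (t : R) : ip (t *: u) v + ip u v = (t + 1) * ip u v.
Proof. rewrite ipZl. ring. Qed.
Lemma tt4 {n} (Q : 'M[R]_n) (u v : 'cV[R]_n) (t : R) : ip u (Q *m (t *: v)) + ip u v = t * ip u (Q *m v) + ip u v.
Proof. ipexp. ring. Qed.
Lemma tt5 {n} (Q : 'M[R]_n) (u v : 'cV[R]_n) (t : R) : ip u (Q *m (u + t *: v)) = ip u (Q *m u) + t * ip u (Q *m v) :> R.
Proof. ipexp. ring. Qed.

Lemma small_t (a b c : R) : 0 <= c -> (forall t, 0 < t < 1 -> a <= b + t * c) -> a <= b.
Proof.
move=> c0 H; rewrite leNgt; apply/negP => ab.
set e := a - b.
have e0 : 0 < e by rewrite subr_gt0.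
set t := e / (2 * (c + e)).
have ce0 : 0 < c + e by lra.
have Ht : t * (2 * (c + e)) = e by rewrite /t mulfVK // gt_eqF // mulr_gt0 // ltr0n.
have t0 : 0 < t by rewrite /t divr_gt0 // mulr_gt0 // ltr0n.
have t1 : t < 1.
  rewrite /t ltr_pdivrMr ?mulr_gt0 ?ltr0n //; lra.
have := H t; rewrite t0 t1 /= => /(_ isT) h.
have h1 : e <= t * c by rewrite /e; lra.
have h2 : e * (2 * (c + e)) <= t * c * (2 * (c + e)) by rewrite ler_pM2r // mulr_gt0 // ltr0n.
have h3 : t * c * (2 * (c + e)) = e * c by rewrite mulrAC Ht mulrC.
have h4 : 0 <= e * c by rewrite mulr_ge0 // ltW.
nra.
Qed.

Lemma vi_abs {n} (p : 'cV[R]_n -> \bar R) (h : 'cV[R]_n -> R) (gr : 'cV[R]_n) (C : 'cV[R]_n -> R) x1 :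
 convex_efun p ->
 (forall x, (p x1 + (h x1)%:E <= p x + (h x)%:E)%E) ->
 (forall d t, h (x1 + t *: d) = h x1 + t * ip gr d + t^+2 * C d) ->
 (forall d, 0 <= C d) ->
 p x1 \is a fin_num -> forall x, p x \is a fin_num ->
 fine (p x1) - fine (p x) <= ip gr (x - x1).
Proof.
move=> hconv hmin hexp' hC f1 x fx.
apply: (small_t _ _ _ (hC (x - x1))) => t /andP[t0 t1].
have e1 : t *: x + (1 - t) *: x1 = x1 + t *: (x - x1).
  by apply/matrixP => i j; rewrite !mxE; ring.
have H2 := hconv x x1 t; rewrite t0 t1 e1 /= in H2; have {H2} := H2 isT.
have H1 := hmin (x1 + t *: (x - x1)).
rewrite hexp' in H1.
move=> H2.
rewrite -(fineK f1) -(fineK fx) in H1 H2.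
set P1 := fine (p x1) in H1 H2 *; set P := fine (p x) in H2 *.
have H3 := le_trans H1 (leeD2r ((h x1 + t * ip gr (x - x1) + t ^+ 2 * C (x - x1))%:E) H2).
rewrite -!EFinM -!EFinD lee_fin in H3.
have H4 : t * (P1 - P) <= t * (ip gr (x - x1) + t * C (x - x1)).
  lra.
rewrite ler_pM2l // in H4.
Qed.

Ltac canon :=
 repeat match goal with
 | |- context[ip (?Q *m ?u) ?v] =>
      match goal with hQ : selfadj Q |- _ => rewrite (ipQl Q u v hQ) end
 | |- context[ip ?u (?Q *m ?v)] =>
    tryif constr_eq u v then fail else
    match goal with |- context[ip v (Q *m u)] =>
      match goal with hQ : selfadj Q |- _ => rewrite (ipQsym Q v u hQ) end end
 | |- context[ip ?u ?v] =>
    tryif constr_eq u v then fail else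
    match goal with |- context[ip v u] => rewrite (ipC v u) end
 end.

Lemma nrm2_addZ {n} (a r : 'cV[R]_n) k : nrm2 (a + k *: r) = nrm2 a + 2 * k * ip a r + k ^+ 2 * nrm2 r.
Proof. rewrite /nrm2; ipexp; canon; by field. Qed.

Lemma zpart {n} (z0 z1 z r : 'cV[R]_n) tau sigma : 0 < tau -> 0 < sigma ->
  z1 = z0 + (tau * sigma) *: r ->
  (tau * sigma)^-1 * nrm2 (z1 - z) = (tau * sigma)^-1 * nrm2 (z0 - z) + 2 * ip (z0 - z) r + tau * sigma * nrm2 r.
Proof.
move=> t0 s0 ->.
have -> : z0 + (tau * sigma) *: r - z = (z0 - z) + (tau * sigma) *: r.
  by apply/matrixP => i j; rewrite !mxE; ring.
rewrite nrm2_addZ; field; by rewrite !gt_eqF.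
Qed.
Lemma sqn_ge0 {n} (Q : 'M[R]_n) u : psd Q -> 0 <= sqn Q u.
Proof. by move=> h; apply: h. Qed.

Lemma grad_ineq {n} (f : 'cV[R]_n -> R) gr (Sf Shf : 'M[R]_n) x x0 x1 :
  quad_bounds f gr Sf Shf -> psd Sf -> selfadj Sf -> selfadj Shf ->
  ip (gr x0) (x - x1) + ip (x1 - x) (gr x) <= 2^-1 * sqn Shf (x1 - x0) - 4^-1 * sqn Sf (x1 - x0).
Proof.
move=> qb ps hS hSh.
have [h1 _] := qb x x0.
have [_ h2] := qb x1 x0.
have [h3 _] := qb x1 x.
have h4 := sqn_ge0 _ (x - x0 - (x1 - x)) ps.
move: h1 h2 h3 h4; rewrite /sqn; ipexp; canon.
move=> *; lra.
Qed.

Lemma cocoer {n} (g : 'cV[R]_n -> R) gr (Sg Shg : 'M[R]_n) a b v :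
  quad_bounds g gr Sg Shg -> psd Sg -> selfadj Shg ->
  - ip (gr a - gr b) v <= 4^-1 * sqn Shg (v - (a - b)).
Proof.
move=> qb ps hSh.
set hh := 2^-1 *: (v - (a - b)).
have [h1 _] := qb (a + hh) b.
have [_ h2] := qb (a + hh) a.
have [h3 _] := qb (b - hh) a.
have [_ h4] := qb (b - hh) b.
have g1 := sqn_ge0 _ (a + hh - b) ps.
have g2 := sqn_ge0 _ (b - hh - a) ps.
move: h1 h2 h3 h4 g1 g2; rewrite /hh /sqn; ipexp; canon.
move=> *; lra.
Qed.
Lemma part_a_real {nx ny nz} (A : 'M[R]_(nx,nz)) (B : 'M[R]_(ny,nz)) c Sf Shf S Sg Shg T sigma tau
  x0 x1 x y0 y1 y z0 z1 z gfx0 gfx ggy0 ggy P0 P1 Q0 Q1 :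
 selfadj Sf -> selfadj Shf -> selfadj S -> selfadj Sg -> selfadj Shg -> selfadj T -> 0 < sigma -> 0 < tau ->
 z1 = z0 + (tau * sigma) *: (A^T *m x1 + B^T *m y1 - c) ->
 P1 - P0 <= ip (gfx0 + (Shf + S) *m (x1 - x0) + A *m z0 + sigma *: (A *m (A^T *m x1 + (B^T *m y0 - c)))) (x - x1) ->
 Q1 - Q0 <= ip (ggy0 + (Shg + T) *m (y1 - y0) + B *m z0 + sigma *: (B *m (B^T *m y1 + (A^T *m x1 - c)))) (y - y1) ->
 ip gfx0 (x - x1) + ip (x1 - x) gfx <= 2^-1 * sqn Shf (x1 - x0) - 4^-1 * sqn Sf (x1 - x0) ->
 ip ggy0 (y - y1) + ip (y1 - y) ggy <= 2^-1 * sqn Shg (y1 - y0) - 4^-1 * sqn Sg (y1 - y0) ->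
 P1 + Q1 - (P0 + Q0) + (ip (x1 - x) (gfx + A *m z) + ip (y1 - y) (ggy + B *m z) + ip (z0 + sigma *: (A^T *m x1 + B^T *m y1 - c) - z) (- (A^T *m x + B^T *m y - c)))
 + 2^-1 * (((tau * sigma)^-1 * nrm2 (z1 - z) + sqn (Shf + S) (x1 - x) + sqn (Shg + T) (y1 - y) + sigma * nrm2 (A^T *m x + B^T *m y1 - c)) - ((tau * sigma)^-1 * nrm2 (z0 - z) + sqn (Shf + S) (x0 - x) + sqn (Shg + T) (y0 - y) + sigma * nrm2 (A^T *m x + B^T *m y0 - c)))
 <= - (2^-1 * (sqn (2^-1 *: Sf + S) (x1 - x0) + sqn (2^-1 *: Sg + T) (y1 - y0) + (1 - tau) * sigma * nrm2 (A^T *m x1 + B^T *m y1 - c) + sigma * nrm2 (A^T *m x1 + B^T *m y0 - c))).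
Proof.
move=> hSf hShf hS hSg hShg hT s0 t0 hz VIx VIy hF hG.
rewrite (zpart z0 z1 z _ tau sigma t0 s0 hz).
move: VIx VIy hF hG; rewrite /sqn /nrm2; ipexp.
rewrite ?(ipMl A) ?(ipMr A) ?(ipMl B) ?(ipMr B); ipexp; canon.
move=> *; lra.
Qed.
Lemma part_b_vi {nx ny nz} (A : 'M[R]_(nx,nz)) (B : 'M[R]_(ny,nz)) c Shg T sigma tau
  x0 x1 ym y0 y1 zm z0 ggym ggy0 Q0 Q1 :
 selfadj Shg -> selfadj T ->
 z0 = zm + (tau * sigma) *: (A^T *m x0 + B^T *m y0 - c) ->
 Q1 - Q0 <= ip (ggy0 + (Shg + T) *m (y1 - y0) + B *m z0 + sigma *: (B *m (B^T *m y1 + (A^T *m x1 - c)))) (y0 - y1) ->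
 Q0 - Q1 <= ip (ggym + (Shg + T) *m (y0 - ym) + B *m zm + sigma *: (B *m (B^T *m y0 + (A^T *m x0 - c)))) (y1 - y0) ->
 - ip (ggy0 - ggym) (y1 - y0) <= 4^-1 * sqn Shg ((y1 - y0) - (y0 - ym)) ->
 0 <= sqn (2^-1 *: Shg + T) ((y1 - y0) - (y0 - ym)) ->
 2 * sigma * ip (A^T *m x1 + B^T *m y1 - c) (B^T *m (y1 - y0)) + sqn (Shg + T) (y1 - y0) - sqn (Shg + T) (y0 - ym)
  <= 2 * (1 - tau) * sigma * ip (A^T *m x0 + B^T *m y0 - c) (B^T *m (y1 - y0)).
Proof.
move=> hShg hT hz V1 V2 hc hp.
move: V1 V2 hc hp; rewrite hz /sqn /nrm2; ipexp.
rewrite ?(ipMl A) ?(ipMr A) ?(ipMl B) ?(ipMr B); ipexp; canon.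
move=> *; lra.
Qed.

Lemma f4_scalar (tau NB W0 N0 : R) : 0 < tau ->
  0 <= NB - 2 * W0 + N0 -> 0 <= tau ^+ 2 * NB + 2 * tau * W0 + N0 ->
  0 <= (1 - Num.min tau (1 + tau - tau^+2)) * NB - 2 * (1 - tau) * W0 + (1 - Num.min tau tau^-1) * N0.
Proof.
move=> t0 h1 h2.
have [t1|t1] := leP tau 1.
  rewrite min_l; last by nra.
  rewrite min_l; last by rewrite -(ler_pM2l t0) mulfV ?gt_eqF //; nra.
  have := mulr_ge0 (x := 1 - tau) (y := NB - 2 * W0 + N0); rewrite subr_ge0 => /(_ t1 h1); lra.
rewrite min_r; last by nra.
rewrite min_r; last by rewrite -(ler_pM2l t0) mulfV ?gt_eqF //; nra.
have -> : (1 - (1 + tau - tau ^+ 2)) * NB - 2 * (1 - tau) * W0 + (1 - tau^-1) * N0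
  = (1 - tau^-1) * (tau ^+ 2 * NB + 2 * tau * W0 + N0).
  by field; rewrite gt_eqF.
apply: mulr_ge0 => //; rewrite subr_ge0 invf_le1 //; lra.
Qed.

Lemma part_b_scalar (Gr phi1 phi0 s NA NB N1 N0 NV W W0 xi1 xi0 sigma tau alpha : R) :
 0 < sigma -> 0 < tau -> 0 < alpha <= 1 ->
 Gr + 2^-1 * (phi1 - phi0) <= -(2^-1 * (s + (1 - tau) * sigma * N1 + sigma * NV)) ->
 NA <= 2 * NV + 2 * N0 ->
 NV = N1 - 2 * W + NB ->
 2 * sigma * W + xi1 - xi0 <= 2 * (1 - tau) * sigma * W0 ->
 0 <= (1 - Num.min tau (1 + tau - tau^+2)) * NB - 2 * (1 - tau) * W0 + (1 - Num.min tau tau^-1) * N0 ->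
 Gr + 2^-1 * ((phi1 + (1 - alpha * Num.min tau tau^-1) * sigma * N1 + alpha * xi1)
              - (phi0 + (1 - alpha * Num.min tau tau^-1) * sigma * N0 + alpha * xi0))
 <= -(2^-1 * ((s + (2^-1 * (1 - alpha) * sigma) * NA + (Num.min tau (1 + tau - tau ^+ 2) * alpha * sigma) * NB)
             + (- tau + alpha * Num.min (1 + tau) (1 + tau^-1)) * sigma * N1)).
Proof.
move=> s0 t0 /andP[a0 a1] Ha F1 F2 F3 F4.
have hm : Num.min (1 + tau) (1 + tau^-1) = 1 + Num.min tau tau^-1.
  rewrite !minEle lerD2l; by case: ifP.
rewrite hm.
set mu := Num.min tau (1 + tau - tau ^+ 2) in F4 *.
set nu := Num.min tau tau^-1 in F4 *.
have P1 : 0 <= (1 - alpha) * sigma * (2 * NV + 2 * N0 - NA).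
  by rewrite !mulr_ge0 //; lra.
have P2 : 0 <= alpha * (2 * (1 - tau) * sigma * W0 - (2 * sigma * W + xi1 - xi0)).
  by rewrite mulr_ge0 //; lra.
have P3 : 0 <= alpha * sigma * ((1 - mu) * NB - 2 * (1 - tau) * W0 + (1 - nu) * N0).
  by rewrite !mulr_ge0 //; lra.
have P4 : alpha * sigma * (NV - (N1 - 2 * W + NB)) = 0 by rewrite F2 subrr mulr0.
lra.
Qed.
Lemma F1lem {nx ny nz} (A : 'M[R]_(nx,nz)) (B : 'M[R]_(ny,nz)) c x0 x1 y0 :
  nrm2 (A^T *m (x1 - x0)) <= 2 * nrm2 (A^T *m x1 + B^T *m y0 - c) + 2 * nrm2 (A^T *m x0 + B^T *m y0 - c).
Proof.
have h := nrm2_ge0 ((A^T *m x1 + B^T *m y0 - c) + (A^T *m x0 + B^T *m y0 - c)).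
move: h; rewrite /nrm2; ipexp; canon; move=> *; lra.
Qed.

Lemma F2lem {nx ny nz} (A : 'M[R]_(nx,nz)) (B : 'M[R]_(ny,nz)) c x1 y0 y1 :
  nrm2 (A^T *m x1 + B^T *m y0 - c) = nrm2 (A^T *m x1 + B^T *m y1 - c)
     - 2 * ip (A^T *m x1 + B^T *m y1 - c) (B^T *m (y1 - y0)) + nrm2 (B^T *m (y1 - y0)).
Proof. rewrite /nrm2; ipexp; canon; lra. Qed.

Lemma F4a {n} (w r0 : 'cV[R]_n) : 0 <= nrm2 w - 2 * ip r0 w + nrm2 r0.
Proof. have h := nrm2_ge0 (w - r0); move: h; rewrite /nrm2; ipexp; canon; move=> *; lra. Qed.

Lemma F4b {n} (w r0 : 'cV[R]_n) tau : 0 <= tau ^+ 2 * nrm2 w + 2 * tau * ip r0 w + nrm2 r0.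
Proof.
have -> : tau ^+ 2 * nrm2 w + 2 * tau * ip r0 w + nrm2 r0 = nrm2 (tau *: w + r0).
  rewrite /nrm2; ipexp; canon; ring.
exact: nrm2_ge0.
Qed.
End IP.

Lemma ereal_reduce (R : realType) (a1 a0 b1 b0 : \bar R) (r L U : R) :
 a1 \is a fin_num -> b1 \is a fin_num -> a0 != -oo%E -> b0 != -oo%E ->
 (a0 \is a fin_num -> b0 \is a fin_num -> fine a1 + fine b1 - (fine a0 + fine b0) + r + L <= U) ->
 ((a1 + b1) - (a0 + b0) + r%:E + L%:E <= U%:E)%E.
Proof.
case: a1 => // r1 _; case: b1 => // s1 _.
case: a0 => [r0| |] // _; case: b0 => [s0| |] // _ /=.
- move=> /(_ isT isT) h. by rewrite -!EFinD lee_fin.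
all: by move=> _; rewrite addeNy !addNye leNye.
Qed.

Lemma fin_upd (R : realType) n (p : 'cV[R]_n -> \bar R) (h : 'cV[R]_n -> R) x1 :
  proper_fun p -> (forall x, (p x1 + (h x1)%:E <= p x + (h x)%:E)%E) -> p x1 \is a fin_num.
Proof.
move=> [ev [x hx]] hm.
rewrite fin_numE ev /=.
have fx : p x \is a fin_num by rewrite fin_numE ev /= lt_eqF.
have := hm x; rewrite -(fineK fx) => H.
apply/negP => /eqP E; move: H; rewrite E addye //= -EFinD leye_eq.
Qed.


Theorem proposition3p4 (R : realType) (nx ny nz : nat)
  (p : 'cV[R]_nx -> \bar R) (q : 'cV[R]_ny -> \bar R)
  (f : 'cV[R]_nx -> R) (g : 'cV[R]_ny -> R)
  (gradf : 'cV[R]_nx -> 'cV[R]_nx) (gradg : 'cV[R]_ny -> 'cV[R]_ny)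
  (A : 'M[R]_(nx, nz)) (B : 'M[R]_(ny, nz)) (c : 'cV[R]_nz)
  (Sf Shf S : 'M[R]_nx) (Sg Shg T : 'M[R]_ny)
  (sigma tau : R)
  (X : nat -> 'cV[R]_nx) (Y : nat -> 'cV[R]_ny) (Z : nat -> 'cV[R]_nz) :
  (* p, q closed proper convex *)
  proper_fun p -> convex_efun p -> closed_efun p ->
  proper_fun q -> convex_efun q -> closed_efun q ->
  (* f, g convex, differentiable, Lipschitz gradients *)
  convex_fun f -> is_gradient f gradf -> lipschitz_fun gradf ->
  convex_fun g -> is_gradient g gradg -> lipschitz_fun gradg ->
  (* Sigma operators *)
  selfadj Sf -> psd Sf -> selfadj Shf -> psd Shf -> psd (Shf - Sf) ->
  selfadj Sg -> psd Sg -> selfadj Shg -> psd Shg -> psd (Shg - Sg) ->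
  quad_bounds f gradf Sf Shf -> quad_bounds g gradg Sg Shg ->
  (* algorithm parameters *)
  0 < sigma -> 0 < tau ->
  selfadj S -> selfadj T ->
  psd (Shf + S + sigma *: (A *m A^T)) -> psd (Shg + T + sigma *: (B *m B^T)) ->
  (* starting point *)
  (p (X 0%N) < +oo)%E -> (q (Y 0%N) < +oo)%E ->
  (* x-update *)
  (forall (k : nat) (x : 'cV[R]_nx),
     (p (X k.+1) + (ip (gradf (X k)) (X k.+1)
        + 2^-1 * sqn (Shf + S) (X k.+1 - X k) + ip (Z k) (A^T *m X k.+1)
        + sigma / 2 * nrm2 (A^T *m X k.+1 + B^T *m Y k - c))%:E
      <= p x + (ip (gradf (X k)) x
        + 2^-1 * sqn (Shf + S) (x - X k) + ip (Z k) (A^T *m x)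
        + sigma / 2 * nrm2 (A^T *m x + B^T *m Y k - c))%:E)%E) ->
  (* y-update *)
  (forall (k : nat) (y : 'cV[R]_ny),
     (q (Y k.+1) + (ip (gradg (Y k)) (Y k.+1)
        + 2^-1 * sqn (Shg + T) (Y k.+1 - Y k) + ip (Z k) (B^T *m Y k.+1)
        + sigma / 2 * nrm2 (A^T *m X k.+1 + B^T *m Y k.+1 - c))%:E
      <= q y + (ip (gradg (Y k)) y
        + 2^-1 * sqn (Shg + T) (y - Y k) + ip (Z k) (B^T *m y)
        + sigma / 2 * nrm2 (A^T *m X k.+1 + B^T *m y - c))%:E)%E) ->
  (* z-update *)
  (forall k : nat,
     Z k.+1 = Z k + (tau * sigma) *: (A^T *m X k.+1 + B^T *m Y k.+1 - c)) ->
  let r := fun k : nat => A^T *m X k + B^T *m Y k - c in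
  let ztil := fun k : nat => Z k + sigma *: r k.+1 in  (* ztil k = \tilde z^{k+1} *)
  let Gamma := fun (k : nat) (x : 'cV[R]_nx) (y : 'cV[R]_ny) (z : 'cV[R]_nz) =>
    ((p (X k.+1) + q (Y k.+1)) - (p x + q y)
     + (ip (X k.+1 - x) (gradf x + A *m z) + ip (Y k.+1 - y) (gradg y + B *m z)
        + ip (ztil k - z) (- (A^T *m x + B^T *m y - c)))%:E)%E in
  let phi := fun (k : nat) (x : 'cV[R]_nx) (y : 'cV[R]_ny) (z : 'cV[R]_nz) =>
    (tau * sigma)^-1 * nrm2 (Z k - z) + sqn (Shf + S) (X k - x)
    + sqn (Shg + T) (Y k - y) + sigma * nrm2 (A^T *m x + B^T *m Y k - c) in
  (* xi k = xi_k = ||y^k - y^{k-1}||^2_{Shg+T}, used for k >= 1 *)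
  let xi := fun k : nat => sqn (Shg + T) (Y k - Y k.-1) in
  (* s k = s_{k+1} *)
  let s := fun k : nat =>
    sqn (2^-1 *: Sf + S) (X k.+1 - X k) + sqn (2^-1 *: Sg + T) (Y k.+1 - Y k) in
  let Hf := fun alpha : R => 2^-1 *: Sf + S + (2^-1 * (1 - alpha) * sigma) *: (A *m A^T) in
  let Mg := fun alpha : R =>
    2^-1 *: Sg + T + (Num.min tau (1 + tau - tau ^+ 2) * alpha * sigma) *: (B *m B^T) in
  (* t alpha k = t_{k+1} *)
  let t := fun (alpha : R) (k : nat) =>
    sqn (Hf alpha) (X k.+1 - X k) + sqn (Mg alpha) (Y k.+1 - Y k) in
  (* (a) *)
  (forall (k : nat) (x : 'cV[R]_nx) (y : 'cV[R]_ny) (z : 'cV[R]_nz),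
     (Gamma k x y z + (2^-1 * (phi k.+1 x y z - phi k x y z))%:E
      <= (- (2^-1 * (s k + (1 - tau) * sigma * nrm2 (r k.+1)
                     + sigma * nrm2 (A^T *m X k.+1 + B^T *m Y k - c))))%:E)%E)
  /\
  (* (b) *)
  (psd (2^-1 *: Shg + T) ->
   forall alpha : R, 0 < alpha <= 1 ->
   let kappa := 1 - alpha * Num.min tau tau^-1 in
   forall (k : nat), (1 <= k)%N ->
   forall (x : 'cV[R]_nx) (y : 'cV[R]_ny) (z : 'cV[R]_nz),
     (Gamma k x y z
      + (2^-1 * ((phi k.+1 x y z + kappa * sigma * nrm2 (r k.+1) + alpha * xi k.+1)
                 - (phi k x y z + kappa * sigma * nrm2 (r k) + alpha * xi k)))%:E
      <= (- (2^-1 * (t alpha k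
                     + (- tau + alpha * Num.min (1 + tau) (1 + tau^-1))
                       * sigma * nrm2 (r k.+1))))%:E)%E).


Proof.
move=> pp pc _ qp qc _ _ _ _ _ _ _ hSf pSf hShf _ _ hSg pSg hShg _ _ qbf qbg s0 t0 hS hT pQx pQy
  _ _ updx updy updz r ztil Gamma phi xi s Hf Mg tt.
have sadd : forall n (M1 M2 : 'M[R]_n), selfadj M1 -> selfadj M2 -> selfadj (M1 + M2).
  by move=> n M1 M2 h1 h2; rewrite /selfadj linearD /= h1 h2.
have hQf := sadd _ _ _ hShf hS.
have hQg := sadd _ _ _ hShg hT.
have VIx : forall k x, p x \is a fin_num ->
   fine (p (X k.+1)) - fine (p x) <= ip (gradf (X k) + (Shf + S) *m (X k.+1 - X k) + A *m Z k
      + sigma *: (A *m (A^T *m X k.+1 + (B^T *m Y k - c)))) (x - X k.+1).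
  move=> k x fx.
  pose h := fun x => ip (gradf (X k)) x + 2^-1 * sqn (Shf + S) (x - X k) + ip (Z k) (A^T *m x)
     + sigma / 2 * nrm2 (A^T *m x + (B^T *m Y k - c)).
  have e : forall v : 'cV[R]_nx, A^T *m v + (B^T *m Y k - c) = A^T *m v + B^T *m Y k - c.
    by move=> v; rewrite addrA.
  have hm : forall x, (p (X k.+1) + (h (X k.+1))%:E <= p x + (h x)%:E)%E.
    by move=> x'; rewrite /h /= !e; exact: updx.
  apply: (vi_abs _ _ _ (fun d => 2^-1 * (sqn (Shf + S) d + sigma * nrm2 (A^T *m d))) _ pc hm _ _ (fin_upd _ _ _ _ _ pp hm) x fx).
    by move=> d t'; exact: hexp.
  move=> d; apply: mulr_ge0; first by rewrite invr_ge0 ler0n.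
  by have := pQx d; rewrite sqnDm sqnZm sqnAAT.
have VIy : forall k y, q y \is a fin_num ->
   fine (q (Y k.+1)) - fine (q y) <= ip (gradg (Y k) + (Shg + T) *m (Y k.+1 - Y k) + B *m Z k
      + sigma *: (B *m (B^T *m Y k.+1 + (A^T *m X k.+1 - c)))) (y - Y k.+1).
  move=> k y fy.
  pose h := fun y => ip (gradg (Y k)) y + 2^-1 * sqn (Shg + T) (y - Y k) + ip (Z k) (B^T *m y)
     + sigma / 2 * nrm2 (B^T *m y + (A^T *m X k.+1 - c)).
  have e : forall v : 'cV[R]_ny, B^T *m v + (A^T *m X k.+1 - c) = A^T *m X k.+1 + B^T *m v - c.
    by move=> v; apply/matrixP => i j; rewrite !mxE; ring.
  have hm : forall y, (q (Y k.+1) + (h (Y k.+1))%:E <= q y + (h y)%:E)%E.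
    by move=> y'; rewrite /h /= !e; exact: updy.
  apply: (vi_abs _ _ _ (fun d => 2^-1 * (sqn (Shg + T) d + sigma * nrm2 (B^T *m d))) _ qc hm _ _ (fin_upd _ _ _ _ _ qp hm) y fy).
    by move=> d t'; exact: hexp.
  move=> d; apply: mulr_ge0; first by rewrite invr_ge0 ler0n.
  by have := pQy d; rewrite sqnDm sqnZm sqnAAT.
have finX : forall k, p (X k.+1) \is a fin_num.
  move=> k.
  pose h := fun x => ip (gradf (X k)) x + 2^-1 * sqn (Shf + S) (x - X k) + ip (Z k) (A^T *m x)
     + sigma / 2 * nrm2 (A^T *m x + B^T *m Y k - c).
  exact: (fin_upd _ _ _ h _ pp (updx k)).
have finY : forall k, q (Y k.+1) \is a fin_num.
  move=> k.
  pose h := fun y => ip (gradg (Y k)) y + 2^-1 * sqn (Shg + T) (y - Y k) + ip (Z k) (B^T *m y)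
     + sigma / 2 * nrm2 (A^T *m X k.+1 + B^T *m y - c).
  exact: (fin_upd _ _ _ h _ qp (updy k)).
split.
  move=> k x y z.
  rewrite /Gamma; apply: ereal_reduce; [exact: finX | exact: finY | exact: pp.1 | exact: qp.1 | ].
  move=> fx fy.
  rewrite /phi /s /ztil /r /=.
  exact: (part_a_real A B c Sf Shf S Sg Shg T sigma tau (X k) (X k.+1) x (Y k) (Y k.+1) y
    (Z k) (Z k.+1) z (gradf (X k)) (gradf x) (gradg (Y k)) (gradg y)
    (fine (p x)) (fine (p (X k.+1))) (fine (q y)) (fine (q (Y k.+1)))
    hSf hShf hS hSg hShg hT s0 t0 (updz k) (VIx k x fx) (VIy k y fy)
    (grad_ineq f gradf Sf Shf x (X k) (X k.+1) qbf pSf hSf hShf)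
    (grad_ineq g gradg Sg Shg y (Y k) (Y k.+1) qbg pSg hSg hShg)).
move=> psdH alpha /andP[a0 a1] kappa k hk x y z.
case: k hk => // k _.
have et : tt alpha k.+1 = (sqn (2^-1 *: Sf + S) (X k.+2 - X k.+1) + sqn (2^-1 *: Sg + T) (Y k.+2 - Y k.+1))
   + (2^-1 * (1 - alpha) * sigma) * nrm2 (A^T *m (X k.+2 - X k.+1))
   + (Num.min tau (1 + tau - tau ^+ 2) * alpha * sigma) * nrm2 (B^T *m (Y k.+2 - Y k.+1)).
  rewrite /tt /Hf /Mg /=.
  rewrite [sqn (_ + _ *: (A *m A^T)) _]sqnDm [sqn (_ + _ *: (B *m B^T)) _]sqnDm !sqnZm !sqnAAT.
  lra.
rewrite et.
rewrite /Gamma; apply: ereal_reduce; [exact: finX | exact: finY | exact: pp.1 | exact: qp.1 | ].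
move=> fx fy.
have Ha := (part_a_real A B c Sf Shf S Sg Shg T sigma tau (X k.+1) (X k.+2) x (Y k.+1) (Y k.+2) y
    (Z k.+1) (Z k.+2) z (gradf (X k.+1)) (gradf x) (gradg (Y k.+1)) (gradg y)
    (fine (p x)) (fine (p (X k.+2))) (fine (q y)) (fine (q (Y k.+2)))
    hSf hShf hS hSg hShg hT s0 t0 (updz k.+1) (VIx k.+1 x fx) (VIy k.+1 y fy)
    (grad_ineq f gradf Sf Shf x (X k.+1) (X k.+2) qbf pSf hSf hShf)
    (grad_ineq g gradg Sg Shg y (Y k.+1) (Y k.+2) qbg pSg hSg hShg)).
have F3 := (part_b_vi A B c Shg T sigma tau (X k.+1) (X k.+2) (Y k) (Y k.+1) (Y k.+2) (Z k) (Z k.+1)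
    (gradg (Y k)) (gradg (Y k.+1)) (fine (q (Y k.+1))) (fine (q (Y k.+2)))
    hShg hT (updz k) (VIy k.+1 (Y k.+1) (finY k)) (VIy k (Y k.+2) (finY k.+1))
    (cocoer g gradg Sg Shg (Y k.+1) (Y k) (Y k.+2 - Y k.+1) qbg pSg hShg)
    (psdH ((Y k.+2 - Y k.+1) - (Y k.+1 - Y k)))).
have F1 := F1lem A B c (X k.+1) (X k.+2) (Y k.+1).
have F2 := F2lem A B c (X k.+2) (Y k.+1) (Y k.+2).
have F4 := f4_scalar _ _ _ _ t0 (F4a (B^T *m (Y k.+2 - Y k.+1)) (A^T *m X k.+1 + B^T *m Y k.+1 - c))
   (F4b (B^T *m (Y k.+2 - Y k.+1)) (A^T *m X k.+1 + B^T *m Y k.+1 - c) tau).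
have := part_b_scalar _ _ _ _ _ _ _ _ _ _ _ _ _ sigma tau alpha s0 t0 (introT andP (conj a0 a1)) Ha F1 F2 F3 F4.
rewrite /phi /xi /kappa /r /ztil /=.
exact.
Qed.
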